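(* Suppose the e-values are valid ($\mathbb{E}[e_t\mid\mathcal{F}_{t-1}]\le1$ a.s. whenever $\theta_t=0$), and that the null e-values $\{e_j:\theta_j=0\}$ are mutually independent and independent of the non-null e-values $\{e_j:\theta_j=1\}$, each null e-value satisfying $\mathbb{E}[e_j]\le 1$. Suppose the testing levels are of the form $\alpha_t=f_t(\delta_1,\dots,\delta_{t-1})$ for deterministic functions $f_t:\{0,1\}^{t-1}\to[0,\infty)$ that are coordinatewise nondecreasing. Let $$\mathrm{FDP}^*_{\mathrm{e\text{-}ind}}(t)=\frac{\sum_{j\in\mathcal{H}_0(t)}\alpha_j}{R_t\vee1}.$$ Then for every $t\ge1$: if $\mathbb{E}[\mathrm{FDP}^*_{\mathrm{e\text{-}ind}}(t)]\le\alpha$, then $\mathrm{FDR}(t)\le\alpha$.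
   Context: Let $\alpha\in(0,1)$ be a target level. Hypotheses are indexed by $t=1,2,\dots$; $\theta_t\in\{0,1\}$ is a fixed (non-random) indicator with $\theta_t=0$ iff the $t$-th null hypothesis is true. $e_1,e_2,\dots$ are nonnegative random variables (e-values). Testing levels $\alpha_1,\alpha_2,\dots$ are nonnegative random variables and the decisions are $\delta_t=\mathbb{1}\{e_t\ge 1/\alpha_t\}$ (with $\delta_t=0$ when $\alpha_t=0$). Let $\mathcal{F}_t=\sigma(\delta_1,\dots,\delta_t)$, $\mathcal{F}_0$ trivial. $R_t=\sum_{j=1}^t\delta_j$, $R_0=0$. $\mathcal{H}_0(t)=\{j\le t:\theta_j=0\}$. $\mathrm{FDR}(t)=\mathbb{E}\big[\sum_{j\in\mathcal{H}_0(t)}\delta_j/(R_t\vee 1)\big]$. *)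

(* Defs.v *)
From HB Require Import structures.
From mathcomp Require Import all_boot all_order all_algebra.
From mathcomp Require Import all_classical all_reals all_analysis.
Set Implicit Arguments. Unset Strict Implicit. Unset Printing Implicit Defensive.
Import Order.TTheory GRing.Theory Num.Theory.
Local Open Scope classical_set_scope.
Local Open Scope ring_scope.

Section OnlineEBH.
Variables (R : realType).

Definition dec_of (a x : R) : bool := (0 < a) && (a^-1 <= x).

Variables (T : Type) (f : nat -> seq bool -> R) (e : nat -> T -> R).

(* decs n w = [:: delta_1 w; ...; delta_n w], where
   alpha_t = f t [:: delta_1; ...; delta_(t-1)] and delta_t = dec_of alpha_t (e t) *)
Fixpoint decs (n : nat) (w : T) : seq bool :=
  match n with
  | 0 => [::]
  | n'.+1 => let s := decs n' w in rcons s (dec_of (f n'.+1 s) (e n'.+1 w))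
  end.

Definition alpha_lvl (t : nat) (w : T) : R := f t (decs t.-1 w).
Definition delta (t : nat) (w : T) : bool := nth false (decs t w) t.-1.
Definition nrej (t : nat) (w : T) : nat := \sum_(1 <= j < t.+1) delta j w.

Variable theta : nat -> bool. (* theta j = true iff theta_j = 1 (non-null) *)

Definition FDP (t : nat) (w : T) : R :=
  (\sum_(1 <= j < t.+1 | ~~ theta j) (delta j w)%:R) / Num.max (nrej t w)%:R 1.

Definition FDPstar (t : nat) (w : T) : R :=
  (\sum_(1 <= j < t.+1 | ~~ theta j) alpha_lvl j w) / Num.max (nrej t w)%:R 1.
End OnlineEBH.

Definition levels_ok (R : realType) (f : nat -> seq bool -> R) : Prop :=
  (forall t s, size s = t.-1 -> 0 <= f t s) /\
  (forall t s1 s2, size s1 = t.-1 -> size s2 = t.-1 ->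
     (forall i, (i < t.-1)%N -> nth false s1 i ==> nth false s2 i) ->
     f t s1 <= f t s2).

Local Open Scope ereal_scope.

(* Validity: E[e_t | F_(t-1)] <= 1 a.s. for null t, with
   F_(t-1) = sigma(delta_1,...,delta_(t-1)); the events of F_(t-1) are exactly
   the sets {w | (delta_1 w,...,delta_(t-1) w) \in S}. *)
Definition valid_evalues (d : measure_display) (T : measurableType d)
  (R : realType) (P : probability T R) (f : nat -> seq bool -> R)
  (e : nat -> T -> R) (theta : nat -> bool) : Prop :=
  forall t, (1 <= t)%N -> ~~ theta t ->
    forall S : set (seq bool),
      \int[P]_(w in [set w | S (decs f e t.-1 w)]) (e t w)%:E
        <= P [set w | S (decs f e t.-1 w)].

(* The null e-values are mutually independent and independent of the family of
   non-null e-values (checked on the generating pi-system of finite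
   rectangles). *)
Definition null_indep (d : measure_display) (T : measurableType d)
  (R : realType) (P : probability T R) (e : nat -> T -> R)
  (theta : nat -> bool) : Prop :=
  forall (J0 J1 : seq nat) (B : nat -> set R),
    uniq J0 -> all (fun j => ~~ theta j) J0 -> all theta J1 ->
    (forall j, measurable (B j)) ->
    P (\bigcap_(j in [set j | j \in J0 ++ J1]) (e j @^-1` B j)) =
      (\prod_(j <- J0) P (e j @^-1` B j)) *
      P (\bigcap_(j in [set j | j \in J1]) (e j @^-1` B j)).

(* Main.v *)
Require Import Defs.
From HB Require Import structures.
From mathcomp Require Import all_boot all_order all_algebra.
From mathcomp Require Import all_classical all_reals all_analysis.
Import Order.TTheory GRing.Theory Num.Theory.
Import measurable_realfun.
Set Implicit Arguments. Unset Strict Implicit.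
Local Open Scope classical_set_scope.
Local Open Scope ring_scope.


Local Close Scope ring_scope.
Section Gen.
Variables (T : Type) (bit : nat -> seq bool -> T -> bool).
Fixpoint gdecs n w : seq bool := match n with 0 => [::]
  | n'.+1 => rcons (gdecs n' w) (bit n'.+1 (gdecs n' w) w) end.

Lemma size_gdecs n w : size (gdecs n w) = n.
Proof. by elim: n => //= n IH; rewrite size_rcons IH. Qed.

Lemma take_gdecs k n w : (k <= n)%N -> take k (gdecs n w) = gdecs k w.
Proof.
elim: n => [|n IH]; first by rewrite leqn0 => /eqP ->.
rewrite leq_eqVlt => /orP [/eqP ->|]; first by rewrite take_oversize // size_gdecs.
rewrite ltnS => kn /=; rewrite -cats1 takel_cat ?size_gdecs //; exact: IH.
Qed.

Lemma nth_gdecs k n w : (1 <= k <= n)%N ->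
  nth false (gdecs n w) k.-1 = bit k (gdecs k.-1 w) w.
Proof.
case: k => // k /andP [_ kn] /=.
rewrite -(nth_take _ (ltnSn k)) take_gdecs //= nth_rcons size_gdecs ltnn eqxx //.
Qed.

Lemma gdecs_char n w x : size x = n ->
  (gdecs n w = x <-> forall k, (1 <= k <= n)%N -> nth false x k.-1 = bit k (take k.-1 x) w).
Proof.
move=> sx; split.
  by move=> <- k kn; rewrite nth_gdecs // take_gdecs //; case: k kn => // k /andP [_ /ltnW].
elim: n x sx => [|n IH] x sx H; first by case: x sx H.
move: sx H; case/lastP: x => [//|x b]; rewrite size_rcons => -[sx] H /=.
have Hx : gdecs n w = x.
  apply: IH => // k /andP [k1 kn].
  have := H k; rewrite k1 (leq_trans kn) // => /(_ isT).
  rewrite nth_rcons sx; case: k k1 kn => // k _ kn /=.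
  by rewrite kn -cats1 takel_cat // sx ltnW.
rewrite Hx; congr rcons; have := H n.+1; rewrite leqnn /= => /(_ isT).
by rewrite nth_rcons sx ltnn eqxx -cats1 takel_cat ?sx // -sx take_size => ->.
Qed.
End Gen.

Lemma gdecs_mono T (b1 b2 : nat -> seq bool -> T -> bool) w :
  (forall k s1 s2, size s1 = k.-1 -> size s2 = k.-1 ->
     (forall i, (i < k.-1)%N -> nth false s1 i ==> nth false s2 i) ->
     b1 k s1 w ==> b2 k s2 w) ->
  forall n i, (i < n)%N -> nth false (gdecs b1 n w) i ==> nth false (gdecs b2 n w) i.
Proof.
move=> H; elim=> // n IH i; rewrite ltnS /= !nth_rcons !size_gdecs.
rewrite leq_eqVlt => /orP [/eqP ->|lt]; last by rewrite lt; exact: IH.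
by rewrite ltnn eqxx; apply: H; rewrite ?size_gdecs.
Qed.

Lemma gdecs_eq T (b1 b2 : nat -> seq bool -> T -> bool) w n :
  (forall k, (1 <= k <= n)%N -> b1 k (gdecs b1 k.-1 w) w = b2 k (gdecs b1 k.-1 w) w) ->
  gdecs b1 n w = gdecs b2 n w.
Proof.
elim: n => // n IH H /=.
have e : gdecs b1 n w = gdecs b2 n w.
  by apply: IH => k /andP [k1 kn]; apply: H; rewrite k1 ltnW.
by rewrite -e (H n.+1) // leqnn.
Qed.


Local Open Scope ring_scope.
Lemma mdecset (R : realType) (a : R) (b : bool) : measurable [set y : R | dec_of a y = b].
Proof.
have E : [set y : R | a^-1 <= y] = `[a^-1, +oo[%classic.
  by apply/seteqP; split => y /=; rewrite in_itv /= andbT.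
rewrite /dec_of; case: (ltP 0 a) => a0 /=.
  case: b.
    by rewrite (_ : [set y | _] = [set y : R | a^-1 <= y]) ?E //; apply/seteqP; split => y /= /eqP.
  rewrite (_ : [set y | _] = ~` [set y : R | a^-1 <= y]).
    by apply: measurableC; rewrite E.
  by apply/seteqP; split => y /=; case: (a^-1 <= y).
by case: b; [rewrite (_ : [set y | _] = set0) //; apply/seteqP; split => y //=
  | rewrite (_ : [set y | _] = setT) //; apply/seteqP; split => y //=].
Qed.

Section M.
Context d (T : measurableType d) (R : realType).

Lemma measurable_gdecs (bit : nat -> seq bool -> T -> bool)
  (hb : forall k s b, measurable [set w | bit k s w = b]) n x :
  measurable [set w | gdecs bit n w = x].
Proof.
have [sx|sx] := eqVneq (size x) n; last first.
  rewrite (_ : [set w | _] = set0) //; apply/seteqP; split => w //= E.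
  by move: sx; rewrite -E size_gdecs eqxx.
rewrite (_ : [set w | _] = \bigcap_k (if (1 <= k <= n)%N then
   [set w | bit k (take k.-1 x) w = nth false x k.-1] else setT)).
  by apply: bigcapT_measurable => k; case: ifP.
apply/seteqP; split => w /=.
  move/(gdecs_char bit w sx) => H k _; case: ifP => // /H ->; done.
move=> H; apply/(gdecs_char bit w sx) => k kn.
by have := H k I; rewrite kn /= => ->.
Qed.

Lemma sum_tuple (g : seq bool -> R) (bit : nat -> seq bool -> T -> bool) n w :
  g (gdecs bit n w) =
  \sum_(x : n.-tuple bool) g x * \1_[set w | gdecs bit n w = tval x] w.
Proof.
rewrite (bigD1 (@Tuple n bool _ (introT eqP (size_gdecs bit n w)))) //=.
rewrite big1 ?addr0; first by rewrite indicE mem_set // mulr1.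
move=> x nx; rewrite indicE memNset ?mulr0 //= => E.
by move/negP: nx; apply; apply/eqP/val_inj.
Qed.

Lemma measurable_fun_gdecs (g : seq bool -> R) (bit : nat -> seq bool -> T -> bool)
  (hb : forall k s b, measurable [set w | bit k s w = b]) n :
  measurable_fun setT (fun w => g (gdecs bit n w)).
Proof.
rewrite (_ : (fun w => _) = fun w => \sum_(x : n.-tuple bool)
   g x * \1_[set w | gdecs bit n w = tval x] w); last first.
  by apply/funext => w; exact: sum_tuple.
apply: measurable_sum => x; apply: measurable_funM; first exact: measurable_cst.
by apply: measurable_indic; exact: measurable_gdecs.
Qed.
End M.


Section I.
Context d (T : measurableType d) (R : realType) (P : probability T R).

Lemma indep_int (X : T -> R) (A : set T) :
  measurable A -> measurable_fun setT X -> (forall w, 0 <= X w) ->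
  (forall C, measurable C -> P (X @^-1` C `&` A) = (P (X @^-1` C) * P A)%E) ->
  (\int[P]_w (X w)%:E <= 1)%E ->
  (\int[P]_w (X w * \1_A w)%:E <= P A)%E.
Proof.
move=> mA mX X0 ind intX.
set Y := fun w => X w * \1_A w.
have mY : measurable_fun setT Y.
  by apply: measurable_funM => //; exact: measurable_indic.
have Y0 w : 0 <= Y w by rewrite /Y indicE mulr_ge0.
have PA01 : (0 <= P A <= 1)%E by rewrite measure_ge0 probability_le1.
set pA := fine (P A).
have PA : P A = pA%:E by rewrite fineK // ge0_fin_numE ?measure_ge0 // (le_lt_trans (probability_le1 _ mA)) ?ltry.
have pA0 : 0 <= pA by move: PA01; rewrite PA !lee_fin => /andP [].
have pA1 : 0 <= 1 - pA by move: PA01; rewrite PA !lee_fin subr_ge0 => /andP [].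
pose h := fun y : R => (Num.max y 0)%:E.
have mh : measurable_fun setT h.
  by apply/measurable_EFinP; apply: measurable_maxr => //; exact: measurable_cst.
have h0 y : (0 <= h y)%E by rewrite /h lee_fin le_max lexx orbT.
have hE y : 0 <= y -> h y = y%:E by move=> y0; rewrite /h; congr EFin; apply/max_idPl.
have -> : (\int[P]_w (Y w)%:E = \int[pushforward P Y]_(y in setT) h y)%E.
  rewrite ge0_integral_pushforward //; try by move=> y _; exact: h0.
  by rewrite preimage_setT; apply: eq_integral => w _ /=; rewrite hE.
pose mPX := measure_function_pushforward__canonical__measure_function_Measure P mX.
rewrite (eq_measure_integral (measure_add (mscale (NngNum pA0) mPX)
   (mscale (NngNum pA1) (\d_(0%R:R))))); last first.
  idtac.
  move=> C mC _; have E := measure_addE (mscale (NngNum pA0) mPX) (mscale (NngNum pA1) (\d_(0%R:R))) C.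
  transitivity (mscale (NngNum pA0) mPX C + mscale (NngNum pA1) (\d_(0%R:R)) C)%E; last exact: (esym E).
  rewrite /mscale /=. change (P (Y @^-1` C) = pA%:E * P (X @^-1` C) + (1 - pA)%:E * \d_(0%R:R) C)%E.
  have mXC : measurable (X @^-1` C) by rewrite -(setTI (X @^-1` C)); exact: (mX measurableT C mC).
  rewrite (_ : Y @^-1` C = (X @^-1` C `&` A) `|` (~` A `&` [set _ | C 0])); last first.
    apply/seteqP; split => w /=; rewrite /Y indicE.
      by case: (pselect (A w)) => Aw; rewrite ?(mem_set Aw) ?(memNset Aw) ?mulr1 ?mulr0;
        [left|right].
    by case => -[] Cw Aw; [rewrite (mem_set Aw) mulr1 | rewrite (memNset Cw) mulr0].
    
  rewrite measureU //; last 3 first.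
  - exact: measurableI.
  - by apply: measurableI; [exact: measurableC|case: (pselect (C 0)) => c;
      [rewrite (_ : [set _ | _] = setT)|rewrite (_ : [set _ | _] = set0)] => //;
      apply/seteqP; split].
  - by apply/seteqP; split => w // -[[_ ?] [? _]].
  transitivity (P (X @^-1` C) * P A + P (~` A `&` [set _ | C 0%R]))%E; first by congr (_ + _)%E; exact: ind.
  rewrite PA diracE [in RHS]muleC; congr (_ + _)%E.
  case: (pselect (C 0)) => c.
    rewrite (_ : [set _ | _] = setT); last by apply/seteqP; split.
    by rewrite setIT probability_setC // PA mem_set // mule1.
  rewrite (_ : [set _ | _] = set0); last by apply/seteqP; split.
  by rewrite setI0 measure0 memNset // mule0.
rewrite ge0_integral_measure_add //; try by move=> y _; exact: h0.
rewrite !ge0_integral_mscale //; try by move=> y _; exact: h0.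
rewrite integral_dirac // diracE mem_set // /h /= maxxx mul1e mule0 adde0.
rewrite ge0_integral_pushforward //; try by move=> y _; exact: h0.
rewrite preimage_setT.
rewrite (eq_integral (fun w => (X w)%:E)); last by move=> w _ /=; rewrite -/(h (X w)) hE.
by rewrite PA -[X in (_ <= X)%E]mule1 lee_wpmul2l // lee_fin.
Qed.
End I.


Lemma rect_indep d (T : measurableType d) (R : realType) (P : probability T R)
  (e : nat -> T -> R) (theta : nat -> bool) (hind : null_indep P e theta)
  j (K : seq nat) (B : nat -> set R) :
  ~~ theta j -> uniq K -> j \notin K -> (forall k, measurable (B k)) ->
  forall C, measurable C ->
  P (e j @^-1` C `&` \bigcap_(k in [set k | k \in K]) e k @^-1` B k) =
  (P (e j @^-1` C) * P (\bigcap_(k in [set k | k \in K]) e k @^-1` B k))%E.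
Proof.
move=> tj uK jK mB C mC.
set K0 := [seq k <- K | ~~ theta k]; set K1 := [seq k <- K | theta k].
pose B' := fun k => if k == j then C else B k.
have mB' k : measurable (B' k) by rewrite /B'; case: ifP.
have jK0 : j \notin K0 by rewrite mem_filter negb_and jK orbT.
have uK0 : uniq K0 by rewrite filter_uniq.
have aK0 : all (fun k => ~~ theta k) K0 by apply/allP => k; rewrite mem_filter => /andP [].
have aK1 : all theta K1 by apply/allP => k; rewrite mem_filter => /andP [].
have h1 := hind (j :: K0) K1 B'; rewrite /= jK0 uK0 tj aK0 aK1 /= in h1.
have h2 := hind K0 K1 B uK0 aK0 aK1 mB.
have memK k : (k \in K0 ++ K1) = (k \in K).
  by rewrite mem_cat !mem_filter; case: (theta k); rewrite ?orbF.
have S2 : \bigcap_(k in [set k | k \in K0 ++ K1]) e k @^-1` B k =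
          \bigcap_(k in [set k | k \in K]) e k @^-1` B k.
  by apply/seteqP; split => w /= H k /= kK; apply: H => /=; rewrite ?memK // -memK.
rewrite S2 in h2.
have S1 : \bigcap_(k in [set k | k \in (j :: K0) ++ K1]) e k @^-1` B' k =
    e j @^-1` C `&` \bigcap_(k in [set k | k \in K]) e k @^-1` B k.
  apply/seteqP; split => w /=.
    move=> H; split; first by have := H j; rewrite /B' eqxx /= inE eqxx => /(_ isT).
    move=> k /= kK; have := H k; rewrite /B' /= inE memK kK orbT => /(_ isT).
    by case: eqP => // kj; move: jK; rewrite -kj kK.
  move=> [Cw H] k /=; rewrite inE /B'; case: eqP => [->//|_] /= kK.
  by apply: H => /=; rewrite -memK.
have PB k : k \in K0 -> P (e k @^-1` B' k) = P (e k @^-1` B k).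
  by move=> kK0; rewrite /B'; case: eqP => // kj; move: jK0; rewrite -kj kK0.
have jK1 : j \notin K1 by rewrite mem_filter negb_and jK orbT.
have S3 : \bigcap_(k in [set k | k \in K1]) e k @^-1` B' k =
          \bigcap_(k in [set k | k \in K1]) e k @^-1` B k.
  apply/seteqP; split => w /= H k /= kK; have := H k kK; rewrite /B';
    by case: eqP => // kj; move: jK1; rewrite -kj kK.
rewrite -S1 h1 // S3 big_cons /B' eqxx -/B' (eq_big_seq _ PB) -muleA h2 //.
Qed.


Lemma dec_mono (R : realType) (a a' x : R) : a <= a' -> dec_of a x ==> dec_of a' x.
Proof.
rewrite /dec_of => aa; apply/implyP => /andP [a0 ax].
have a'0 : 0 < a' by exact: lt_le_trans a0 aa.
by rewrite a'0 /=; apply: le_trans ax; rewrite lef_pV2 ?posrE.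
Qed.

Section Main.
Context d (T : measurableType d) (R : realType) (P : probability T R)
  (theta : nat -> bool) (e : nat -> T -> R) (f : nat -> seq bool -> R).
Hypotheses (me : forall t, measurable_fun setT (e t)) (e0 : forall t w, 0 <= e t w)
  (hind : null_indep P e theta)
  (hint : forall j, (1 <= j)%N -> ~~ theta j -> (\int[P]_w (e j w)%:E <= 1)%E)
  (hf : levels_ok f).

Let hf1 : forall t s, size s = t.-1 -> 0 <= f t s := proj1 hf.
Let hf2 : forall t s1 s2, size s1 = t.-1 -> size s2 = t.-1 ->
     (forall i, (i < t.-1)%N -> nth false s1 i ==> nth false s2 i) ->
     f t s1 <= f t s2 := proj2 hf.

Definition bitD k s w := dec_of (f k s) (e k w).
Definition bitF j k s w := (k == j) || bitD k s w.

Lemma decsE n w : decs f e n w = gdecs bitD n w.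
Proof. by elim: n => //= n ->. Qed.

Lemma mbitD k s b : measurable [set w | bitD k s w = b].
Proof.
rewrite -(setTI [set w | _]); exact: (me k measurableT (mdecset _ _)).
Qed.

Lemma mbitF j k s b : measurable [set w | bitF j k s w = b].
Proof.
rewrite /bitF; case: eqP => _ /=; last exact: mbitD.
by case: b; [rewrite (_ : [set w | _] = setT) | rewrite (_ : [set w | _] = set0)] => //;
  apply/seteqP; split.
Qed.

Definition gnum t (s : seq bool) : nat := (\sum_(1 <= i < t.+1) nth false s i.-1)%N.
Definition Mx t s : R := Num.max (gnum t s)%:R 1.
Lemma Mx_ge1 t s : 1 <= Mx t s.
Proof. by rewrite /Mx le_max lexx orbT. Qed.
Lemma Mx_gt0 t s : 0 < Mx t s.
Proof. exact: lt_le_trans ltr01 (Mx_ge1 t s). Qed.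

Definition gD j t s : R := (nth false s j.-1)%:R / Mx t s.
Definition gA j t s : R := f j (take j.-1 s) / Mx t s.

Lemma gD_ge0 j t s : 0 <= gD j t s.
Proof. by rewrite /gD divr_ge0 // ltW // Mx_gt0. Qed.

Lemma gA_ge0 j t s : (1 <= j <= t)%N -> size s = t -> 0 <= gA j t s.
Proof.
move=> /andP [j1 jt] ss; rewrite /gA divr_ge0 //; last exact: ltW (Mx_gt0 _ _).
apply: hf1; rewrite size_takel // ss; exact: leq_trans (leq_pred j) jt.
Qed.

Section J.
Variables (t j : nat) (jt : (1 <= j <= t)%N) (tj : ~~ theta j).
Local Notation D := (gdecs bitD t).
Local Notation DF := (gdecs (bitF j) t).

Lemma monoF w i : (i < t)%N -> nth false (D w) i ==> nth false (DF w) i.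
Proof.
apply: gdecs_mono => k s1 s2 h1 h2 h; rewrite /bitF; apply/implyP => H.
apply/orP; right; move: H; apply/implyP; apply: dec_mono; exact: hf2.
Qed.

Lemma eqF w : nth false (D w) j.-1 -> DF w = D w.
Proof.
move=> H; symmetry; apply: gdecs_eq => k kt; rewrite /bitF; case: eqP => // ->.
by rewrite -(nth_gdecs bitD w jt) H.
Qed.

Lemma takeF w : take j.-1 (DF w) = take j.-1 (D w).
Proof.
have jt' : (j.-1 <= t)%N by case/andP: jt => _; exact: leq_trans (leq_pred j).
rewrite !take_gdecs //; apply: gdecs_eq => k /andP [k1 kj]; rewrite /bitF.
case: eqP => // kj'; move: kj k1; rewrite kj'; case: (j) => [//|n] /=; by rewrite ltnn.
Qed.

Lemma nthF w : nth false (DF w) j.-1 = true.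
Proof. by rewrite nth_gdecs // /bitF eqxx. Qed.

Lemma gnum_mono w : (gnum t (D w) <= gnum t (DF w))%N.
Proof.
rewrite /gnum big_nat_cond [X in (_ <= X)%N]big_nat_cond; apply: leq_sum => i.
case/andP => /andP [i1 it] _; have := monoF w (i := i.-1).
case: i i1 it => // i _; rewrite ltnS => it /= /(_ it).
by case: (nth false (D w) i); case: (nth false (DF w) i).
Qed.

Lemma gnumF1 w : (1 <= gnum t (DF w))%N.
Proof.
rewrite /gnum (bigD1_seq j) ?mem_index_iota ?iota_uniq //= ?nthF // ltnS.
Qed.

Lemma pt1 w : gD j t (D w) <= e j w * gA j t (DF w).
Proof.
case E: (nth false (D w) j.-1).
  rewrite (eqF E) /gD /gA E mulrA; apply: ler_wpM2r; first by rewrite invr_ge0 ltW // Mx_gt0.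
  have : bitD j (gdecs bitD j.-1 w) w by rewrite -(nth_gdecs bitD w jt) E.
  have jt' : (j.-1 <= t)%N by case/andP: jt => _; exact: leq_trans (leq_pred j).
  rewrite /bitD -(take_gdecs bitD w jt') /dec_of => /andP [a0 ax].
  have : (f j (take j.-1 (D w)))^-1 * f j (take j.-1 (D w)) <= e j w * f j (take j.-1 (D w)).
    by rewrite ler_wpM2r // ltW.
  by rewrite mulVf ?gt_eqF.
rewrite /gD E mul0r mulr_ge0 // gA_ge0 // size_gdecs //.
Qed.

Lemma pt2 w : gA j t (DF w) <= gA j t (D w).
Proof.
rewrite /gA takeF ler_wpM2l //.
  by apply: hf1; rewrite size_takel ?size_gdecs //; case/andP: jt => _; exact: leq_trans (leq_pred j).
rewrite lef_pV2 ?posrE ?Mx_gt0 // /Mx.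
by rewrite ge_max !le_max ler_nat gnum_mono lexx !orbT.
Qed.

Lemma keyx (x : t.-tuple bool) :
  (\int[P]_w (e j w * \1_[set w | DF w = tval x] w)%:E <= P [set w | DF w = tval x])%E.
Proof.
have mA : measurable [set w | DF w = tval x] by apply: measurable_gdecs => k s b; exact: mbitF.
case: (boolP (nth false x j.-1)) => xj; last first.
  rewrite (_ : [set w | _] = set0); last first.
    by apply/seteqP; split => w //= E; move: xj; rewrite -E nthF.
  rewrite (eq_integral (fun _ => 0%E)); last by move=> w _; rewrite indicE in_set0 mulr0.
  by rewrite integral0 measure0.
set K := [seq k <- iota 1 t | k != j].
set B := fun k => [set y : R | dec_of (f k (take k.-1 x)) y = nth false x k.-1].
have EA : [set w | DF w = tval x] = \bigcap_(k in [set k | k \in K]) e k @^-1` B k.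
  apply/seteqP; split => w /=.
    move/(gdecs_char (bitF j) w (size_tuple x)) => H k /=.
    rewrite mem_filter mem_iota add1n ltnS => /andP [kj /andP [k1 kt]] /=.
    by have := H k; rewrite k1 kt /bitF (negbTE kj) /= => /(_ isT) E; rewrite /B /= E.
  move=> H; apply/(gdecs_char (bitF j) w (size_tuple x)) => k kt; rewrite /bitF.
  case: eqP => [->|/eqP kj]; first by rewrite xj.
  by rewrite /=; symmetry; apply: (H k); rewrite /= mem_filter mem_iota add1n ltnS kj.
rewrite EA in mA |- *; apply: indep_int => //.
- apply: (rect_indep hind) => //; try by move=> k; exact: mdecset.
  + by rewrite filter_uniq // iota_uniq.
  + by rewrite mem_filter eqxx.
- by apply: hint => //; case/andP: jt.
Qed.

Lemma mid : (\int[P]_w (e j w * gA j t (DF w))%:E <= \int[P]_w (gA j t (DF w))%:E)%E.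
Proof.
have mI x : measurable_fun setT (\1_[set w | DF w = tval x] : T -> R).
  by apply: measurable_indic; apply: measurable_gdecs => k s b; exact: mbitF.
have c0 (x : t.-tuple bool) : 0 <= gA j t x by rewrite gA_ge0 // size_tuple.
rewrite (eq_integral (fun w => \sum_(x : t.-tuple bool)
    ((gA j t x)%:E * (e j w * \1_[set w | DF w = tval x] w)%:E))%E); last first.
  move=> w _; rewrite (sum_tuple (gA j t) (bitF j) t w) mulr_sumr -sumEFin.
  by apply: eq_bigr => x _; rewrite -EFinM mulrCA.
rewrite [X in (_ <= X)%E](eq_integral (fun w => \sum_(x : t.-tuple bool)
    ((gA j t x)%:E * (\1_[set w | DF w = tval x] w)%:E))%E); last first.
  move=> w _; rewrite (sum_tuple (gA j t) (bitF j) t w) -sumEFin.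
  by apply: eq_bigr => x _; rewrite -EFinM.
rewrite !ge0_integral_sum //; try (by move=> x w _; rewrite mule_ge0 // lee_fin // ?mulr_ge0 // indicE);
  try (by move=> x; apply: emeasurable_funM; [exact: measurable_cst|
     apply/measurable_EFinP; try apply: measurable_funM]).
apply: lee_sum => x _.
rewrite !ge0_integralZl_EFin //; try (by move=> w _; rewrite lee_fin ?mulr_ge0 // indicE);
  try (by apply/measurable_EFinP; try apply: measurable_funM).
rewrite lee_wpmul2l ?lee_fin // integral_indic ?setIT ?keyx //.
by apply: measurable_gdecs => k s b; exact: mbitF.
Qed.

Lemma perj : (\int[P]_w (gD j t (D w))%:E <= \int[P]_w (gA j t (D w))%:E)%E.
Proof.
have mDb g : measurable_fun setT (fun w => g (D w) : R).
  by apply: measurable_fun_gdecs => k s b; exact: mbitD.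
have mDF g : measurable_fun setT (fun w => g (DF w) : R).
  by apply: measurable_fun_gdecs => k s b; exact: mbitF.
apply: (@le_trans _ _ (\int[P]_w (e j w * gA j t (DF w))%:E)%E).
  apply: ge0_le_integral => //.
  - by move=> w _; rewrite lee_fin gD_ge0.
  - by apply/measurable_EFinP; exact: mDb.
  - by apply/measurable_EFinP; apply: measurable_funM => //; exact: mDF.
  - by move=> w _; rewrite lee_fin pt1.
apply: le_trans mid _.
apply: ge0_le_integral => //.
- by move=> w _; rewrite lee_fin gA_ge0 // size_gdecs.
- by apply/measurable_EFinP; exact: mDF.
- by apply/measurable_EFinP; exact: mDb.
- by move=> w _; rewrite lee_fin pt2.
Qed.
End J.

Lemma deltaE t i w : (1 <= i <= t)%N -> delta f e i w = nth false (gdecs bitD t w) i.-1.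
Proof.
move=> /andP [i1 it]; rewrite /delta decsE -(take_gdecs bitD w it) nth_take //.
by case: i i1 {it}.
Qed.

Lemma nrejE t w : nrej f e t w = gnum t (gdecs bitD t w).
Proof.
rewrite /nrej /gnum; apply: eq_big_nat => i /andP [i1 it].
by rewrite (deltaE (t := t)) // i1 -ltnS.
Qed.

Lemma alphaE t i w : (1 <= i <= t)%N -> alpha_lvl f e i w = f i (take i.-1 (gdecs bitD t w)).
Proof.
move=> /andP [i1 it]; rewrite /alpha_lvl decsE take_gdecs //.
exact: leq_trans (leq_pred i) it.
Qed.

Lemma mainlem t : (\int[P]_w (FDP f e theta t w)%:E <= \int[P]_w (FDPstar f e theta t w)%:E)%E.
Proof.
set L := [seq j <- index_iota 1 t.+1 | ~~ theta j].
have memL j : j \in L -> (1 <= j <= t)%N && ~~ theta j.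
  by rewrite mem_filter mem_index_iota ltnS andbC.
rewrite (eq_integral (fun w => \sum_(j <- L) (gD j t (gdecs bitD t w))%:E)%E); last first.
  move=> w _; rewrite sumEFin /FDP /L big_filter mulr_suml; congr EFin.
  rewrite big_seq_cond [RHS]big_seq_cond; apply: eq_bigr => i /andP [ii _].
  rewrite mem_index_iota ltnS in ii.
  by rewrite /gD (deltaE (t := t)) // nrejE.
rewrite [X in (_ <= X)%E](eq_integral (fun w => \sum_(j <- L) (if (1 <= j <= t)%N then gA j t (gdecs bitD t w) else 0)%:E)%E); last first.
  move=> w _; rewrite sumEFin /FDPstar /L big_filter mulr_suml; congr EFin.
  rewrite big_seq_cond [RHS]big_seq_cond; apply: eq_bigr => i /andP [ii _].
  rewrite mem_index_iota ltnS in ii.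
  by rewrite ii /gA (alphaE (t := t)) // nrejE.
rewrite !ge0_integral_sum //.
- rewrite big_seq [X in (_ <= X)%E]big_seq; apply: lee_sum => j jL; case/andP: (memL j jL) => jt tj; rewrite jt; exact: perj.
- by move=> j; apply/measurable_EFinP; case: (1 <= j <= t)%N;
    [apply: measurable_fun_gdecs => k s b; exact: mbitD | exact: measurable_cst].
- by move=> j w _; rewrite lee_fin; case: ifP => // jt; rewrite gA_ge0 // size_gdecs.
- by move=> j; apply/measurable_EFinP; apply: measurable_fun_gdecs => k s b; exact: mbitD.
- by move=> j w _; rewrite lee_fin gD_ge0.
Qed.

End Main.


Unset Implicit Arguments.

Theorem theorem5 (d : measure_display) (T : measurableType d) (R : realType)
  (P : probability T R) (alpha : R) (theta : nat -> bool)
  (e : nat -> T -> R) (f : nat -> seq bool -> R) :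
  0 < alpha < 1 ->
  (forall t, measurable_fun setT (e t)) ->
  (forall t w, 0 <= e t w) ->
  valid_evalues P f e theta ->
  null_indep P e theta ->
  (forall j, (1 <= j)%N -> ~~ theta j -> (\int[P]_w (e j w)%:E <= 1)%E) ->
  levels_ok f ->
  forall t, (1 <= t)%N ->
    (\int[P]_w (FDPstar f e theta t w)%:E <= alpha%:E)%E ->
    (\int[P]_w (FDP f e theta t w)%:E <= alpha%:E)%E.
Proof.
move=> _ me e0 _ hind hint hf t _ hstar.
apply: le_trans hstar; exact: (mainlem me e0 hind hint hf).
Qed.
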